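(* Under the substitution $y=1/w$, the Chazy equation $y'''-2yy''+3(y')^{2}=0$ becomes $$-w^{2}w'''+6ww'w''-6(w')^{3}+2ww''-(w')^{2}=0 .$$ For this equation the leading-order behaviour $w=w_0x^{-1}$ is admissible with $w_0$ arbitrary, its resonances are $R=-1,0,1$, and the equation admits formal solutions given by the Right Painlevé series $$w(x)=w_0x^{-1}+w_1+w_2x+\sum_{i\ge3}w_i x^{i-1},$$ in which $w_0\neq0$ and $w_1$ are arbitrary constants and all remaining coefficients are determined by them (the location of the singularity, here $x=0$, providing the third arbitrary constant via $x\mapsto x-x_0$). Consequently $y=1/w$ gives a three-parameter family of solutions of the Chazy equation.
   Context: A Right Painlevé series is a Laurent-type expansion about the singularity containing finitely many negative powers and infinitely many increasing (positive) powers, as opposed to a Left Painlevé series, which has infinitely many decreasing powers. Resonances are the roots $R$ of the polynomial obtained as the coefficient of $m$ after substituting $w=w_0x^{-1}+mx^{-1+R}$ into the dominant terms; they indicate where arbitrary constants enter the expansion. *)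

(* Defs.v *)
From HB Require Import structures.
From mathcomp Require Import all_boot all_order all_algebra.
Set Implicit Arguments. Unset Strict Implicit. Unset Printing Implicit Defensive.
Import Order.TTheory GRing.Theory Num.Theory.
Local Open Scope ring_scope.

Section LaurentSeries.
Variable R : comNzRingType.

(* [LSer m a] represents the formal Laurent series  x^(-m) * sum_(i>=0) a i x^i,
   i.e. a "Right" series: finitely many negative powers, infinitely many
   increasing powers. *)
Record lser := LSer { lord : nat; lcoef : nat -> R }.

Definition fps_mul (a b : nat -> R) (n : nat) : R :=
  \sum_(i < n.+1) a i * b (n - i)%N.
Definition fps_shift (k : nat) (a : nat -> R) (n : nat) : R :=
  if (k <= n)%N then a (n - k)%N else 0.

(* equality of the represented Laurent series:
   x^(-m) A = x^(-k) B  iff  x^k A = x^m B *)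
Definition lser_eq (s t : lser) : Prop :=
  forall n, fps_shift (lord t) (lcoef s) n = fps_shift (lord s) (lcoef t) n.

Definition lmul (s t : lser) : lser :=
  LSer (lord s + lord t) (fps_mul (lcoef s) (lcoef t)).
Definition ladd (s t : lser) : lser :=
  LSer (lord s + lord t)
       (fun n => fps_shift (lord t) (lcoef s) n + fps_shift (lord s) (lcoef t) n).
Definition lscale (c : R) (s : lser) : lser :=
  LSer (lord s) (fun n => c * lcoef s n).
(* d/dx (x^(-m) A) = x^(-m-1) * sum_i (i - m) a_i x^i *)
Definition lderiv (s : lser) : lser :=
  LSer (lord s).+1 (fun n => (n%:R - (lord s)%:R) * lcoef s n).
Definition lconst (c : R) : lser := LSer 0 (fun n => if n == 0%N then c else 0).
Definition lmono (e : int) (c : R) : lser :=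
  match e with
  | Posz k => LSer 0 (fun n => if n == k then c else 0)
  | Negz k => LSer k.+1 (fun n => if n == 0%N then c else 0)
  end.

Definition lpow4 (w : lser) : lser := lmul w (lmul w (lmul w w)).

Definition chazy (y : lser) : lser :=
  let y1 := lderiv y in let y2 := lderiv y1 in let y3 := lderiv y2 in
  ladd (ladd y3 (lscale (- 2%:R) (lmul y y2))) (lscale 3%:R (lmul y1 y1)).

Definition wDom (w : lser) : lser :=
  let w1 := lderiv w in let w2 := lderiv w1 in let w3 := lderiv w2 in
  ladd (ladd (lscale (-1) (lmul w (lmul w w3)))
             (lscale 6%:R (lmul w (lmul w1 w2))))
       (lscale (- 6%:R) (lmul w1 (lmul w1 w1))).

Definition wEq (w : lser) : lser :=
  let w1 := lderiv w in let w2 := lderiv w1 in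
  ladd (ladd (wDom w) (lscale 2%:R (lmul w w2))) (lscale (-1) (lmul w1 w1)).

End LaurentSeries.

(* coefficientwise map (used to extract the coefficient of m) *)
Definition lmap (R S : comNzRingType) (f : R -> S) (s : lser R) : lser S :=
  LSer (lord s) (fun n => f (lcoef s n)).

(* Main.v *)
Require Import Defs.
From HB Require Import structures.
From mathcomp Require Import all_boot all_order all_algebra.
From mathcomp Require Import boolp.
From mathcomp Require Import ring zify.
Import Order.TTheory GRing.Theory Num.Theory.
Local Open Scope ring_scope.
Set Implicit Arguments. Unset Strict Implicit. Unset Printing Implicit Defensive.


Definition fps (R : comNzRingType) := nat -> R.
HB.instance Definition _ (R : comNzRingType) := Choice.on (fps R).

Lemma fps_mulP (R : comNzRingType) (a b : nat -> R) (p q : {poly R}) n :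
  (forall i, (i <= n)%N -> p`_i = a i) -> (forall i, (i <= n)%N -> q`_i = b i) ->
  fps_mul a b n = (p * q)`_n.
Proof.
move=> hp hq; rewrite coefM /fps_mul; apply: eq_bigr => i _.
have ilt : (i <= n)%N by rewrite -ltnS ltn_ord.
by rewrite hp // hq // leq_subr.
Qed.

Definition trp (R : comNzRingType) (n : nat) (a : nat -> R) : {poly R} := \poly_(i < n.+1) a i.
Lemma trpE (R : comNzRingType) n (a : nat -> R) i : (i <= n)%N -> (trp n a)`_i = a i.
Proof. by move=> h; rewrite coef_poly ltnS h. Qed.

Section FpsRing.
Variable R : comNzRingType.
Implicit Types a b c : fps R.

Definition fadd a b : fps R := fun n => a n + b n.
Definition fopp a : fps R := fun n => - a n.
Definition fzero : fps R := fun n => 0.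
Definition fone : fps R := fun n => (n == 0%N)%:R.

Lemma faddA : associative fadd.
Proof. by move=> a b c; apply: funext => n; rewrite /fadd addrA. Qed.
Lemma faddC : commutative fadd.
Proof. by move=> a b; apply: funext => n; rewrite /fadd addrC. Qed.
Lemma fadd0 : left_id fzero fadd.
Proof. by move=> a; apply: funext => n; rewrite /fadd add0r. Qed.
Lemma faddN : left_inverse fzero fopp fadd.
Proof. by move=> a; apply: funext => n; rewrite /fadd /fopp addNr. Qed.

HB.instance Definition _ := GRing.isZmodule.Build (fps R) faddA faddC fadd0 faddN.

Lemma fmulA : associative (@fps_mul R).
Proof.
move=> a b c; apply: funext => n.
rewrite (@fps_mulP _ _ _ (trp n a) (trp n b * trp n c)) => [||i Hi]; last first.
- by rewrite -(@fps_mulP _ b c) // => j Hj; rewrite trpE // (leq_trans Hj Hi).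
- by move=> i Hi; rewrite trpE.
rewrite (@fps_mulP _ _ _ (trp n a * trp n b) (trp n c)) => [||i Hi]; last first.
- by rewrite trpE.
- by move=> i Hi; rewrite -(@fps_mulP _ a b) // => j Hj; rewrite trpE // (leq_trans Hj Hi).
by rewrite mulrA.
Qed.
Lemma fmulC : commutative (@fps_mul R).
Proof.
move=> a b; apply: funext => n.
have ha : forall i, (i <= n)%N -> (trp n a)`_i = a i by move=> i Hi; rewrite trpE.
have hb : forall i, (i <= n)%N -> (trp n b)`_i = b i by move=> i Hi; rewrite trpE.
by rewrite (fps_mulP ha hb) (fps_mulP hb ha) mulrC.
Qed.
Lemma fmul1 : left_id fone (@fps_mul R).
Proof.
move=> a; apply: funext => n.
have ha : forall i, (i <= n)%N -> (trp n a)`_i = a i by move=> i Hi; rewrite trpE.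
have h1 : forall i, (i <= n)%N -> (1 : {poly R})`_i = fone i by move=> i Hi; rewrite coef1.
by rewrite (fps_mulP h1 ha) mul1r trpE.
Qed.
Lemma fmulDl : left_distributive (@fps_mul R) fadd.
Proof.
move=> a b c; apply: funext => n; rewrite /fps_mul /fadd -big_split /=.
by apply: eq_bigr => i _; rewrite mulrDl.
Qed.
HB.instance Definition _ := GRing.Zmodule_isComPzRing.Build (fps R) fmulA fmulC fmul1 fmulDl.
Lemma fone_neq0 : (1 : fps R) != 0.
Proof.
apply/eqP => /(congr1 (fun f : fps R => f 0%N)) /eqP.
by rewrite /= /fone /= oner_eq0.
Qed.
HB.instance Definition _ := GRing.PzSemiRing_isNonZero.Build (fps R) fone_neq0.
End FpsRing.


Section Basic.
Variable R : comNzRingType.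
Implicit Types A B : fps R.

Lemma fmulE A B n : (A * B) n = \sum_(i < n.+1) A i * B (n - i)%N.
Proof. by []. Qed.
Lemma faddE A B n : (A + B) n = A n + B n.
Proof. by []. Qed.
Lemma foppE A n : (- A) n = - A n.
Proof. by []. Qed.
Lemma fsubE A B n : (A - B) n = A n - B n.
Proof. by []. Qed.
Lemma f0E n : (0 : fps R) n = 0.
Proof. by []. Qed.
Lemma f1E n : (1 : fps R) n = (n == 0%N)%:R.
Proof. by []. Qed.

Definition Xf : fps R := fun n => (n == 1%N)%:R.
Definition cst (c : R) : fps R := fun n => if n == 0%N then c else 0.

Lemma mulXE A : Xf * A = fun n => if n is n'.+1 then A n' else 0.
Proof.
apply: funext => -[|n]; rewrite fmulE.
  by rewrite big_ord_recl big_ord0 /Xf /= mul0r addr0.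
rewrite big_ord_recl /Xf /= mul0r add0r big_ord_recl /= mul1r subSS subn0.
rewrite big1 ?addr0 // => i _ /=.
by rewrite /Xf /bump /= mul0r.
Qed.

Lemma shiftE k A : fps_shift k A = Xf ^+ k * A.
Proof.
elim: k A => [|k IH] A.
  by rewrite expr0 mul1r; apply: funext => n; rewrite /fps_shift leq0n subn0.
by rewrite exprS -mulrA -IH mulXE; apply: funext => -[|n] //.
Qed.

Lemma XkE k A n : (Xf ^+ k * A) n = if (k <= n)%N then A (n - k)%N else 0.
Proof. by rewrite -shiftE. Qed.

Lemma cancelX k A B : Xf ^+ k * A = Xf ^+ k * B -> A = B.
Proof.
move=> h; apply: funext => n.
have := congr1 (fun f : fps R => f (n + k)%N) h => /=.
by rewrite !XkE leq_addl addnK.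
Qed.

Lemma cstME c A : cst c * A = fun n => c * A n.
Proof.
apply: funext => n; rewrite fmulE big_ord_recl /= subn0.
rewrite big1 ?addr0 // => i _; by rewrite /cst /= mul0r.
Qed.

Lemma cst1 : cst 1 = 1.
Proof. by apply: funext => -[|n]. Qed.
Lemma cstB a b : cst (a - b) = cst a - cst b.
Proof. by apply: funext => -[|n]; rewrite fsubE /cst /= ?subr0. Qed.
Lemma cstM a b : cst (a * b) = cst a * cst b.
Proof. by rewrite cstME; apply: funext => -[|n]; rewrite /cst /= ?mulr0. Qed.

HB.instance Definition _ := GRing.isZmodMorphism.Build R (fps R) cst cstB.
HB.instance Definition _ := GRing.isMonoidMorphism.Build R (fps R) cst (cst1, cstM).

Lemma natF n : (n%:R : fps R) = cst n%:R.
Proof. by rewrite rmorph_nat. Qed.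

Definition th A : fps R := fun n => n%:R * A n.

Lemma thD A B : th (A + B) = th A + th B.
Proof. by apply: funext => n; rewrite /th !faddE mulrDr. Qed.
Lemma thN A : th (- A) = - th A.
Proof. by apply: funext => n; rewrite /th !foppE mulrN. Qed.
Lemma thB A B : th (A - B) = th A - th B.
Proof. by rewrite thD thN. Qed.
Lemma thM A B : th (A * B) = th A * B + A * th B.
Proof.
apply: funext => n; rewrite /th faddE !fmulE mulr_sumr -big_split /=.
apply: eq_bigr => i _; have Hi : (i <= n)%N by rewrite -ltnS ltn_ord.
rewrite -{1}(subnKC Hi) natrD; ring.
Qed.
Lemma th_cst c : th (cst c) = 0.
Proof. by apply: funext => -[|n]; rewrite /th /cst /= ?mul0r ?mulr0. Qed.
Lemma th0 : th 0 = 0.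
Proof. by apply: funext => n; rewrite /th f0E mulr0. Qed.
Lemma th_nat n : th (n%:R) = 0.
Proof. by rewrite natF th_cst. Qed.
Lemma thX1 : th Xf = Xf.
Proof. by apply: funext => -[|[|n]]; rewrite /th /Xf /= ?mul0r ?mul1r ?mulr0. Qed.
Lemma thX k : th (Xf ^+ k) = k%:R * Xf ^+ k.
Proof.
elim: k => [|k IH]; first by rewrite expr0 -cst1 th_cst mul0r.
by rewrite exprS thM IH thX1 -addn1 natrD; ring.
Qed.

Definition dl (m : nat) A : fps R := th A - m%:R * A.
Arguments dl : simpl never.

Lemma dlD m A B : dl m (A + B) = dl m A + dl m B.
Proof. rewrite /dl thD; ring. Qed.
Lemma dlN m A : dl m (- A) = - dl m A.
Proof. rewrite /dl thN; ring. Qed.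
Lemma dlB m A B : dl m (A - B) = dl m A - dl m B.
Proof. by rewrite dlD dlN. Qed.
Lemma dlM_eq n a b A B : n = (a + b)%N -> dl n (A * B) = dl a A * B + A * dl b B.
Proof. by move=> ->; rewrite /dl thM natrD; ring. Qed.
Lemma dl0 m : dl m 0 = 0.
Proof. by rewrite /dl mulr0 subr0; apply: funext => n; rewrite /th f0E mulr0. Qed.
Lemma dlX k : dl k (Xf ^+ k) = 0.
Proof. by rewrite /dl thX subrr. Qed.
Lemma dlXA k m A : dl (k + m) (Xf ^+ k * A) = Xf ^+ k * dl m A.
Proof. by rewrite (dlM_eq _ _ (erefl _)) dlX mul0r add0r. Qed.

Definition cf (s : lser R) : fps R := lcoef s.
Arguments cf : simpl never.

Lemma lseqE s t : lser_eq s t <-> Xf ^+ (lord t) * cf s = Xf ^+ (lord s) * cf t.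
Proof.
split => [H|H n]; first by apply: funext => n; rewrite -!shiftE; exact: H.
by rewrite !shiftE H.
Qed.
Lemma cf_mul s t : cf (lmul s t) = cf s * cf t.
Proof. by []. Qed.
Lemma cf_add s t : cf (ladd s t) = Xf ^+ (lord t) * cf s + Xf ^+ (lord s) * cf t.
Proof. by rewrite -!shiftE. Qed.
Lemma cf_scale c s : cf (lscale c s) = cst c * cf s.
Proof. by rewrite cstME. Qed.
Lemma cf_deriv s : cf (lderiv s) = dl (lord s) (cf s).
Proof.
apply: funext => n; rewrite /dl fsubE natF cstME /th /cf /=; ring.
Qed.
Lemma cf_const c : cf (lconst c) = cst c.
Proof. by []. Qed.
Lemma cf_LSer m (f : nat -> R) : cf (LSer m f) = f.
Proof. by []. Qed.
End Basic.


Definition k1 (K : comNzRingType) (s : K) := - (s * (s + 1) * (s + 2%:R)).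
Definition k2 (K : comNzRingType) (s : K) :=
  - 2%:R * (s * (s - 1) * (s - 2%:R)) + 6%:R
  + 6%:R * (s * (s * (s - 1)) - s * (s - 1) + 2%:R * s) + 18%:R * s ^+ 2.
Definition k3 (K : comNzRingType) (s : K) :=
  - (s * (s - 1) * (s - 2%:R)) + 6%:R * s * (s * (s - 1)) - 6%:R * s ^+ 3.

Lemma wDom_two (K : comNzRingType) (q1 q2 : nat) (a m : K) :
  let N := q1.+1 in let s := (q2%:R - N%:R : K) in
  cf (wDom (LSer N (Xf K ^+ q1 * cst a + Xf K ^+ q2 * cst m))) =
  Xf K ^+ (N + N + N + N + N + N + 6 + q1 + q1 + q2) * cst (a ^+ 2 * m * k1 s)
  + Xf K ^+ (N + N + N + N + N + N + 6 + q1 + q2 + q2) * cst (a * m ^+ 2 * k2 s)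
  + Xf K ^+ (N + N + N + N + N + N + 6 + q2 + q2 + q2) * cst (m ^+ 3 * k3 s).
Proof.
move=> N s.
rewrite /wDom; cbv zeta.
rewrite !(cf_add, cf_mul, cf_scale, cf_deriv) cf_LSer /=.
rewrite /dl !(thD, thB, thN, thM, thX, th_cst, th_nat, th0).
rewrite /s /k1 /k2 /k3 !(rmorphD, rmorphB, rmorphM, rmorphN, rmorph_nat, rmorphXn, rmorph1).
rewrite /N !(addSn, addnS) !(exprS, exprD).
ring.
Qed.


Lemma part1 (R : comNzRingType) (w y : lser R) : lser_eq (lmul y w) (lconst 1) ->
     lser_eq (lmul (lpow4 w) (chazy y)) (wEq w).
Proof.
move=> /lseqE H; apply/lseqE.
rewrite cf_mul cf_const cst1 /= expr0 mul1r mulr1 exprD in H.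
set my := lord y in H *; set mw := lord w in H *.
have E1 : dl my (cf y) * cf w + cf y * dl mw (cf w) = 0.
  by rewrite -(dlM_eq _ _ (erefl (my + mw)%N)) H -exprD dlX.
have E2 : dl my.+1 (dl my (cf y)) * cf w + dl my (cf y) * dl mw (cf w)
   + (dl my (cf y) * dl mw (cf w) + cf y * dl mw.+1 (dl mw (cf w))) = 0.
  rewrite -(dlM_eq _ _ (erefl (my.+1 + mw)%N)) -(dlM_eq _ _ (erefl (my + mw.+1)%N)).
  by rewrite addSn addnS -dlD E1 dl0.
have E3 : dl my.+2 (dl my.+1 (dl my (cf y))) * cf w + dl my.+1 (dl my (cf y)) * dl mw (cf w)
   + (dl my.+1 (dl my (cf y)) * dl mw (cf w) + dl my (cf y) * dl mw.+1 (dl mw (cf w)))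
   + (dl my.+1 (dl my (cf y)) * dl mw (cf w) + dl my (cf y) * dl mw.+1 (dl mw (cf w))
   + (dl my (cf y) * dl mw.+1 (dl mw (cf w)) + cf y * dl mw.+2 (dl mw.+1 (dl mw (cf w))))) = 0.
  rewrite -(dlM_eq _ _ (erefl (my.+2 + mw)%N)) -(dlM_eq _ _ (erefl (my.+1 + mw.+1)%N)).
  rewrite -(dlM_eq _ _ (erefl (my + mw.+2)%N)).
  rewrite !(addSn, addnS) -!dlD.
  by rewrite E2 dl0.
rewrite /chazy /wEq /wDom /lpow4; cbv zeta.
rewrite !(cf_add, cf_mul, cf_scale, cf_deriv) /=.
rewrite ?(rmorphN, rmorph_nat, rmorph1).
rewrite -/my -/mw.
rewrite !(addSn, addnS) !(exprS, exprD).
set Y := cf y in H E1 E2 E3 *; set W := cf w in H E1 E2 E3 *.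
set Y1 := dl my Y in E1 E2 E3 *; set Y2 := dl my.+1 Y1 in E1 E2 E3 *.
set Y3 := dl my.+2 Y2 in E1 E2 E3 *.
set W1 := dl mw W in E1 E2 E3 *; set W2 := dl mw.+1 W1 in E1 E2 E3 *.
set W3 := dl mw.+2 W2 in E1 E2 E3 *.
set u := Xf R ^+ my in H *; set v := Xf R ^+ mw in H *; set X := Xf R.
have e0 : Y * W - u * v = 0 by rewrite H subrr.
have key : W ^+ 4 * (u * Y3 - 2%:R * X * Y * Y2 + 3%:R * X * Y1 * Y1) =
   u ^+ 2 * v * (- (W ^+ 2 * W3) + 6%:R * W * W1 * W2 - 6%:R * W1 ^+ 3)
   + u ^+ 2 * v ^+ 2 * X * (2%:R * W * W2 - W1 ^+ 2).
  apply/eqP; rewrite -subr_eq0; apply/eqP.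
  pose E2e := Y2 * W + Y1 * W1 + (Y1 * W1 + Y * W2).
  pose E3e := Y3 * W + Y2 * W1 + (Y2 * W1 + Y1 * W2) + (Y2 * W1 + Y1 * W2 + (Y1 * W2 + Y * W3)).
  pose E1e := Y1 * W + Y * W1.
  pose E0e := Y * W - u * v.
  transitivity (u * (W ^+ 3 * E3e - 3%:R * W1 * W ^+ 2 * E2e
      + (6%:R * W1 ^+ 2 * W - 3%:R * W2 * W ^+ 2) * E1e
      + (- 6%:R * W1 ^+ 3 + 6%:R * W1 * W2 * W - W3 * W ^+ 2) * E0e)
    + X * (- 2%:R * W ^+ 3 * Y * E2e + 4%:R * W1 * W ^+ 2 * Y * E1e
      + (2%:R * W2 * W - 4%:R * W1 ^+ 2) * (Y * W + u * v) * E0e)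
    + X * (3%:R * W ^+ 2 * (Y1 * W - Y * W1) * E1e + 3%:R * W1 ^+ 2 * (Y * W + u * v) * E0e)).
    rewrite /E0e /E1e /E2e /E3e; ring.
  rewrite /E0e /E1e /E2e /E3e e0 E1 E2 E3; ring.
transitivity (X ^+ 17 * v ^+ 13 * u ^+ 3 * (W ^+ 4 * (u * Y3 - 2%:R * X * Y * Y2 + 3%:R * X * Y1 * Y1))).
  ring.
rewrite key; ring.
Qed.


Lemma XcstE (R : comNzRingType) e (c : R) n : (Xf R ^+ e * cst c) n = if n == e then c else 0.
Proof.
rewrite XkE /cst; case: (leqP e n) => h.
  by rewrite subn_eq0 eqn_leq h andbT.
by rewrite ltn_eqF.
Qed.

Lemma mono_pos (R : comNzRingType) j (c : R) :
  (fun n => if n == j then c else 0) = Xf R ^+ j * cst c.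
Proof. by apply: funext => n; rewrite XcstE. Qed.

Lemma lmono_eq (R : comNzRingType) (L e : nat) (z : int) (c : R) :
  (e%:Z - L%:Z = z) -> lser_eq (LSer L (Xf R ^+ e * cst c)) (lmono z c).
Proof.
case: z => [j|k] h; apply/lseqE; rewrite /=.
  rewrite mono_pos expr0 mul1r mulrA -!exprD.
  by have -> : e = (L + j)%N by lia.
rewrite (_ : (fun n => if n == 0%N then c else 0) = cst c) //.
rewrite mulrA -exprD; by have -> : (k.+1 + e = L)%N by lia.
Qed.

Lemma part2 (R : comNzRingType) (w0 : R) : lser_eq (wDom (lmono (-1) w0)) (lconst 0).
Proof.
have -> : lmono (-1) w0 = LSer 0.+1 (Xf R ^+ 0 * cst w0 + Xf R ^+ 0 * cst 0).
  by rewrite /= rmorph0 mulr0 addr0 expr0 mul1r.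
apply/lseqE; rewrite wDom_two cf_const /= rmorph0 mulr0.
by rewrite !(expr0n, mulr0, mul0r, rmorph0, addr0).
Qed.

Lemma lmap1 (R : comNzRingType) (s : lser {poly R}) e1 e2 e3 g1 g2 g3 :
  cf s = Xf _ ^+ e1 * cst g1 + Xf _ ^+ e2 * cst g2 + Xf _ ^+ e3 * cst g3 ->
  g2`_1 = 0 -> g3`_1 = 0 ->
  lmap (fun p : {poly R} => p`_1) s = LSer (lord s) (Xf R ^+ e1 * cst (g1`_1)).
Proof.
case: s => L f /= H h2 h3; rewrite /lmap /=; congr LSer; apply: funext => n.
have := congr1 (fun F => F n) H; rewrite /cf /= => ->.
rewrite !faddE !XcstE !coefD.
by case: (n == e1); case: (n == e2); case: (n == e3); rewrite ?h2 ?h3 ?coef0 ?addr0 ?add0r.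
Qed.

Lemma part3 (R : numFieldType) (w0 : R) : w0 != 0 -> exists Q : {poly R},
     (forall r : int,
        lser_eq (lmap (fun p : {poly R} => p`_1)
                   (wDom (ladd (lmono (-1) w0%:P) (lmono (r - 1) 'X))))
                (lmono (r - 6) Q.[r%:~R])) /\
     (forall z : R, root Q z <-> z \in [:: -1; 0; 1]).
Proof.
move=> w0n0; exists ((- w0 ^+ 2)%:P * ('X ^+ 3 - 'X)); split; last first.
  move=> z; rewrite rootE !hornerE mulf_eq0 oppr_eq0 expf_eq0 (negbTE w0n0) andbF /=.
  rewrite !inE (_ : z ^+ 3 - z = z * (z - 1) * (z + 1)); last by ring.
  by rewrite !mulf_eq0 subr_eq0 addr_eq0 orbC orbA.
move=> r.
case E: (r - 1) => [j|k].
  have -> : ladd (lmono (-1) w0%:P) (lmono (Posz j) 'X) =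
     LSer 0.+1 (Xf _ ^+ 0 * cst w0%:P + Xf _ ^+ j.+1 * cst 'X).
    rewrite /ladd /=; congr LSer.
    transitivity ((fps_shift 0 (cst w0%:P) : fps {poly R}) + (fps_shift 1 (fun n => if n == j then 'X else 0) : fps {poly R})) => //.
    by rewrite !shiftE mono_pos mulrA -exprD add1n.
  have HW := wDom_two 0 j.+1 (w0%:P) 'X; cbv zeta in HW.
  set sP := (_ - _ : {poly R}) in HW.
  have esP : sP = (j%:R : R)%:P by rewrite /sP rmorph_nat; ring.
  rewrite esP in HW.
  have cX : forall (c : R) n, ((c%:P) * 'X ^+ n)`_1 = c * (1 == n)%:R.
    by move=> c n; rewrite coefCM coefXn.
  have e1 : w0%:P ^+ 2 * 'X * k1 (j%:R : R)%:P = (w0 ^+ 2 * k1 (j%:R : R))%:P * 'X ^+ 1.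
    by rewrite /k1 !(rmorphM, rmorphXn, rmorphN, rmorphD, rmorphB, rmorph_nat, rmorph1); ring.
  have e2 : w0%:P * 'X ^+ 2 * k2 (j%:R : R)%:P = (w0 * k2 (j%:R : R))%:P * 'X ^+ 2.
    by rewrite /k2 !(rmorphM, rmorphXn, rmorphN, rmorphD, rmorphB, rmorph_nat, rmorph1); ring.
  have e3 : 'X ^+ 3 * k3 (j%:R : R)%:P = (k3 (j%:R : R))%:P * 'X ^+ 3.
    by rewrite /k3 !(rmorphM, rmorphXn, rmorphN, rmorphD, rmorphB, rmorph_nat, rmorph1); ring.
  rewrite e1 e2 e3 in HW.
  rewrite (lmap1 HW); try by rewrite cX /= mulr0.
  rewrite cX mulr1.
  have Er : r = (j.+1)%:Z by lia.
  have -> : w0 ^+ 2 * k1 (j%:R : R) = ((- w0 ^+ 2)%:P * ('X^3 - 'X)).[r%:~R].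
    rewrite Er !hornerE /k1 (_ : (Posz j.+1)%:~R = j.+1%:R :> R) //; ring.
  apply: lmono_eq; rewrite /=; lia.
have -> : ladd (lmono (-1) w0%:P) (lmono (Negz k) 'X) =
   LSer k.+2 (Xf _ ^+ k.+1 * cst w0%:P + Xf _ ^+ 1 * cst 'X).
  rewrite /ladd /= add1n; congr LSer.
  transitivity ((fps_shift k.+1 (cst w0%:P) : fps {poly R}) + (fps_shift 1 (cst 'X) : fps {poly R})) => //.
  by rewrite !shiftE.
have HW := wDom_two k.+1 1 (w0%:P) 'X; cbv zeta in HW.
set sP := (_ - _ : {poly R}) in HW.
have esP : sP = (- (k.+1%:R) : R)%:P by rewrite /sP rmorphN rmorph_nat; ring.
rewrite esP in HW.
have cX : forall (c : R) n, ((c%:P) * 'X ^+ n)`_1 = c * (1 == n)%:R.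
  by move=> c n; rewrite coefCM coefXn.
set c := (- (k.+1%:R) : R) in HW.
have e1 : w0%:P ^+ 2 * 'X * k1 c%:P = (w0 ^+ 2 * k1 c)%:P * 'X ^+ 1.
  by rewrite /k1 !(rmorphM, rmorphXn, rmorphN, rmorphD, rmorphB, rmorph_nat, rmorph1); ring.
have e2 : w0%:P * 'X ^+ 2 * k2 c%:P = (w0 * k2 c)%:P * 'X ^+ 2.
  by rewrite /k2 !(rmorphM, rmorphXn, rmorphN, rmorphD, rmorphB, rmorph_nat, rmorph1); ring.
have e3 : 'X ^+ 3 * k3 c%:P = (k3 c)%:P * 'X ^+ 3.
  by rewrite /k3 !(rmorphM, rmorphXn, rmorphN, rmorphD, rmorphB, rmorph_nat, rmorph1); ring.
rewrite e1 e2 e3 in HW.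
rewrite (lmap1 HW); try by rewrite cX /= mulr0.
rewrite cX mulr1.
have Er : r = - (k%:Z) by lia.
have -> : w0 ^+ 2 * k1 c = ((- w0 ^+ 2)%:P * ('X^3 - 'X)).[r%:~R].
  rewrite Er !hornerE /k1 /c intrN (_ : (Posz k)%:~R = k%:R :> R) //; ring.
apply: lmono_eq; rewrite /=; lia.
Qed.


Section Val.
Variable R : comNzRingType.
Implicit Types A B E : fps R.

Definition vge A n := forall i, (i < n)%N -> A i = 0.
Definition ftr n (c : fps R) : fps R := fun i => if (i < n)%N then c i else 0.

Lemma dlE m A k : (dl m A) k = (k%:R - m%:R) * A k.
Proof. by rewrite /dl fsubE natF cstME /th mulrBl. Qed.

Lemma fmul0E A B : (A * B) 0%N = A 0%N * B 0%N.
Proof. by rewrite fmulE big_ord_recl big_ord0 addr0. Qed.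

Lemma fnat0E k : (k%:R : fps R) 0%N = k%:R.
Proof. by rewrite natF. Qed.

Lemma mulAtN A E n : vge E n -> (A * E) n = A 0%N * E n.
Proof.
move=> hE; rewrite fmulE big_ord_recl subn0 big1 ?addr0 // => i _.
rewrite hE ?mulr0 //= /bump /=; have := ltn_ord i; lia.
Qed.

Lemma vge_mul A B a b : vge A a -> vge B b -> vge (A * B) (a + b).
Proof.
move=> hA hB i hi; rewrite fmulE big1 // => j _.
case: (ltnP j a) => hj; first by rewrite hA // mul0r.
rewrite hB ?mulr0 //; have := ltn_ord j; lia.
Qed.
Lemma vge_mull A B b : vge B b -> vge (A * B) b.
Proof. by move=> hB; rewrite -[b]add0n; apply: vge_mul. Qed.
Lemma vge_mulr A B b : vge A b -> vge (A * B) b.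
Proof. by move=> hA; rewrite mulrC; apply: vge_mull. Qed.
Lemma vge_add A B n : vge A n -> vge B n -> vge (A + B) n.
Proof. by move=> hA hB i hi; rewrite faddE hA ?hB ?addr0. Qed.
Lemma vge_opp A n : vge A n -> vge (- A) n.
Proof. by move=> hA i hi; rewrite foppE hA ?oppr0. Qed.
Lemma vge_dl m A n : vge A n -> vge (dl m A) n.
Proof. by move=> hA i hi; rewrite dlE hA ?mulr0. Qed.
Lemma vge_le A n k : vge A n -> (k <= n)%N -> vge A k.
Proof. by move=> hA hk i hi; apply: hA; lia. Qed.

Lemma vge_ftr c n : vge (c - ftr n c) n.
Proof. by move=> i hi; rewrite fsubE /ftr hi subrr. Qed.

Lemma ftr_at c n : ftr n c n = 0.
Proof. by rewrite /ftr ltnn. Qed.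
Lemma ftr0 c n : (0 < n)%N -> ftr n c 0%N = c 0%N.
Proof. by rewrite /ftr => ->. Qed.

Lemma ftr_loc (c d : fps R) n : (forall i, (i < n)%N -> c i = d i) -> ftr n c = ftr n d.
Proof. by move=> h; apply: funext => i; rewrite /ftr; case: ifP => // /h. Qed.

Lemma ftr1 c : ftr 1 c = cst (c 0%N).
Proof. by apply: funext => -[|i]. Qed.

Variable step : nat -> fps R -> R.
Hypothesis step_loc : forall n (f g : fps R), (forall i, (i < n)%N -> f i = g i) -> step n f = step n g.

Fixpoint bld n : seq R :=
  if n is n'.+1 then rcons (bld n') (step n' (fun i => nth 0 (bld n') i)) else [::].
Lemma size_bld n : size (bld n) = n.
Proof. by elim: n => //= n IH; rewrite size_rcons IH. Qed.
Lemma bld_prefix n m i : (i < n)%N -> (n <= m)%N -> nth 0 (bld m) i = nth 0 (bld n) i.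
Proof.
move=> hi; elim: m => [|m IH] hm; first by have : (n <= 0)%N by []; lia.
case: (ltnP n m.+1) => h.
  by rewrite /= nth_rcons size_bld (_ : (i < m)%N); last lia; rewrite IH //; lia.
by have -> : n = m.+1 by lia.
Qed.
Definition srec : fps R := fun i => nth 0 (bld i.+1) i.
Lemma srecE n : srec n = step n srec.
Proof.
rewrite /srec /= nth_rcons size_bld ltnn eqxx.
apply: step_loc => i hi; rewrite /srec (bld_prefix (n := i.+1)) //.
Qed.
End Val.


Section Phi.
Variable R : comNzRingType.
Implicit Types c : fps R.

Definition Dx c := - (c * c * dl 3 (dl 2 (dl 1 c))) + 6%:R * c * dl 1 c * dl 2 (dl 1 c)
   - 6%:R * dl 1 c * dl 1 c * dl 1 c.
Definition Sx c := 2%:R * c * dl 2 (dl 1 c) - dl 1 c * dl 1 c.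
Definition Phi c := Dx c + Xf R ^+ 2 * Sx c.

Lemma cf_wEq c : cf (wEq (LSer 1 c)) = Xf R ^+ 20 * Phi c.
Proof.
rewrite /wEq /wDom; cbv zeta.
rewrite !(cf_add, cf_mul, cf_scale, cf_deriv) cf_LSer /=.
rewrite ?(rmorphN, rmorph_nat, rmorph1).
rewrite /Phi /Dx /Sx; ring.
Qed.

Lemma wEq0 c : lser_eq (wEq (LSer 1 c)) (lconst 0) <-> Phi c = 0.
Proof.
rewrite lseqE cf_const rmorph0 mulr0 expr0 mul1r cf_wEq.
split => [h|->]; last by rewrite mulr0.
by apply: (@cancelX _ 20); rewrite h mulr0.
Qed.

Definition Lin (T E : fps R) :=
  let a0 := T in let a1 := dl 1 T in let a2 := dl 2 a1 in let a3 := dl 3 a2 in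
  let f0 := E in let f1 := dl 1 E in let f2 := dl 2 f1 in let f3 := dl 3 f2 in
  (- (2%:R * a0 * a3) + 6%:R * a1 * a2) * f0 + (6%:R * a0 * a2 - 18%:R * a1 * a1) * f1
   + (6%:R * a0 * a1) * f2 + (- (a0 * a0)) * f3.
Definition Q2 (T E : fps R) :=
  let a0 := T in let a1 := dl 1 T in let a2 := dl 2 a1 in let a3 := dl 3 a2 in
  let f0 := E in let f1 := dl 1 E in let f2 := dl 2 f1 in let f3 := dl 3 f2 in
  f0 * f0 * (- a3 - f3) + f0 * f3 * (- (2%:R * a0)) + f1 * f2 * (6%:R * a0 + 6%:R * f0)
   + f0 * f2 * (6%:R * a1) + f0 * f1 * (6%:R * a2) + f1 * f1 * (- (18%:R * a1) - 6%:R * f1).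
Definition DS (T E : fps R) :=
  let a0 := T in let a1 := dl 1 T in let a2 := dl 2 a1 in let a3 := dl 3 a2 in
  let f0 := E in let f1 := dl 1 E in let f2 := dl 2 f1 in let f3 := dl 3 f2 in
  f0 * (2%:R * a2 + 2%:R * f2) + f2 * (2%:R * a0) + f1 * (- (2%:R * a1) - f1).

Lemma Phi_split T E : Phi (T + E) = Phi T + Lin T E + Q2 T E + Xf R ^+ 2 * DS T E.
Proof.
rewrite /Phi /Dx /Sx /Lin /Q2 /DS (dlD 1 T E) (dlD 2 (dl 1 T) (dl 1 E)).
rewrite (dlD 3 (dl 2 (dl 1 T)) (dl 2 (dl 1 E))); ring.
Qed.

Definition kap (n : nat) : R := - ((n%:R - 1) * n%:R * (n%:R + 1)).

Lemma Phi_decomp c n : (0 < n)%N ->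
  Phi c n = Phi (ftr n c) n + c 0%N ^+ 2 * kap n * c n.
Proof.
move=> n0.
set T := ftr n c; set E := c - T.
have hE : vge E n by apply: vge_ftr.
have cTE : c = T + E by rewrite /E addrC subrK.
have e1 := vge_dl 1 hE; have e2 := vge_dl 2 e1; have e3 := vge_dl 3 e2.
rewrite {1}cTE Phi_split !faddE.
have hQ : vge (Q2 T E) (n + n).
  rewrite /Q2; repeat apply: vge_add; apply: vge_mulr; apply: vge_mul => //.
have hD : vge (DS T E) n.
  rewrite /DS; repeat apply: vge_add; apply: vge_mulr => //.
rewrite hQ; last lia.
have hDS : (Xf R ^+ 2 * DS T E) n = 0.
  by rewrite XkE; case: ifP => // h; apply: hD; lia.
rewrite hDS !addr0; congr (_ + _).
rewrite /Lin; cbv zeta.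
rewrite !faddE (mulAtN _ hE) (mulAtN _ e1) (mulAtN _ e2) (mulAtN _ e3).
rewrite !(faddE, fsubE, foppE, fmul0E, fnat0E) !dlE /E fsubE /T ftr0 // ftr_at subr0.
rewrite /kap; ring.
Qed.
End Phi.


Lemma Phi_at0 (R : comNzRingType) (c : fps R) : Phi c 0%N = 0.
Proof.
rewrite /Phi faddE XkE /= addr0 /Dx.
rewrite !(faddE, fsubE, foppE, fmul0E, fnat0E) !dlE; ring.
Qed.

Lemma Phi_cst1 (R : comNzRingType) (a : R) : Phi (cst a) 1%N = 0.
Proof.
rewrite /Phi faddE XkE /= addr0.
have -> : Dx (cst a) = 0.
  rewrite /Dx /dl !(thD, thB, thN, thM, th_cst, th_nat, th0); ring.
by [].
Qed.

Lemma Phi_at1 (R : comNzRingType) (c : fps R) : Phi c 1%N = 0.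
Proof.
rewrite Phi_decomp // ftr1 Phi_cst1 /kap; ring.
Qed.

Lemma kap_neq0 (R : numFieldType) n : (1 < n)%N -> kap R n != 0.
Proof.
move=> hn; rewrite /kap oppr_eq0 !mulf_neq0 //.
- by rewrite subr_eq0 pnatr_eq1; lia.
- by rewrite pnatr_eq0; lia.
- by rewrite natr1 pnatr_eq0.
Qed.

Lemma part4 (R : numFieldType) (w0 w1 : R) : w0 != 0 -> exists! c : nat -> R,
     c 0%N = w0 /\ c 1%N = w1 /\ lser_eq (wEq (LSer 1 c)) (lconst 0).
Proof.
move=> w0n0.
pose step (n : nat) (f : fps R) : R :=
  if n == 0%N then w0 else if n == 1%N then w1
  else - Phi (ftr n f) n / (f 0%N ^+ 2 * kap R n).
have step_loc : forall n (f g : fps R), (forall i, (i < n)%N -> f i = g i) -> step n f = step n g.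
  move=> n f g h; rewrite /step; case: ifP => // n0; case: ifP => // n1.
  rewrite (ftr_loc h) h //; lia.
set c := @srec R step.
have c0 : c 0%N = w0 by rewrite /c (srecE step_loc).
have c1 : c 1%N = w1 by rewrite /c (srecE step_loc).
have hPhi : forall c' : fps R, c' 0%N = w0 -> Phi c' = 0 -> forall n, (1 < n)%N ->
    c' n = - Phi (ftr n c') n / (w0 ^+ 2 * kap R n).
  move=> c' h0 hP n hn; have := Phi_decomp c' (ltnW hn).
  rewrite hP h0 f0E => h.
  have hd : w0 ^+ 2 * kap R n != 0 by rewrite mulf_neq0 ?expf_neq0 ?kap_neq0.
  apply: (mulfI hd); rewrite [RHS]mulrCA divff // mulr1.
  by apply/eqP; rewrite -addr_eq0 addrC -h.
have cn : forall n, c n = step n c := srecE step_loc.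
have canc : forall x d : R, d != 0 -> x + d * (- x / d) = 0.
  by move=> x d hd; rewrite mulrCA divff // mulr1 subrr.
exists c; split.
  split => //; split => //; apply/wEq0; apply: funext => n.
  case: n => [|[|n]]; first by rewrite Phi_at0.
    by rewrite Phi_at1.
  rewrite Phi_decomp // f0E [c n.+2]cn /step /=.
  have hd : w0 ^+ 2 * kap R n.+2 != 0 by rewrite mulf_neq0 ?expf_neq0 ?kap_neq0.
  by rewrite c0 canc.
move=> c' [h0 [h1 /wEq0 hP]].
have hPc : Phi c = 0.
  apply: funext => n; case: n => [|[|n]]; first by rewrite Phi_at0.
    by rewrite Phi_at1.
  rewrite Phi_decomp // f0E [c n.+2]cn /step /=.
  have hd : w0 ^+ 2 * kap R n.+2 != 0 by rewrite mulf_neq0 ?expf_neq0 ?kap_neq0.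
  by rewrite c0 canc.
apply: funext => n; elim/ltn_ind: n => -[|[|n]] IH; first by rewrite c0 h0.
  by rewrite c1 h1.
rewrite (hPhi c) // (hPhi c') //.
by rewrite (@ftr_loc _ c c') // => i hi; rewrite IH.
Qed.

Lemma part5 (R : numFieldType) (c : nat -> R) : c 0%N != 0 ->
  lser_eq (wEq (LSer 1 c)) (lconst 0) ->
  exists y : lser R, lser_eq (lmul y (LSer 1 c)) (lconst 1) /\
                     lser_eq (chazy y) (lconst 0).
Proof.
move=> c0 hE.
pose C : fps R := c.
pose stepB (n : nat) (f : fps R) : R :=
  if n == 0%N then (c 0%N)^-1 else - (C * ftr n f) n / c 0%N.
have locB : forall n (f g : fps R), (forall i, (i < n)%N -> f i = g i) -> stepB n f = stepB n g.
  by move=> n f g h; rewrite /stepB (ftr_loc h).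
set B := @srec R stepB.
have Bn : forall n, B n = stepB n B := srecE locB.
have cB : C * B = 1.
  apply: funext => -[|n].
    by rewrite fmul0E Bn /stepB /= f1E /= mulfV.
  rewrite (_ : B = ftr n.+1 B + (B - ftr n.+1 B)); last by rewrite addrC subrK.
  rewrite mulrDr faddE (mulAtN _ (@vge_ftr _ B n.+1)) fsubE ftr_at subr0 [B n.+1]Bn /stepB /=.
  by rewrite f1E /= mulrCA divff // mulr1 subrr.
exists (LSer 0 (Xf R * B)).
have hy : lser_eq (lmul (LSer 0 (Xf R * B)) (LSer 1 c)) (lconst 1).
  apply/lseqE; rewrite cf_const cst1 cf_mul !cf_LSer /= expr0 mul1r mulr1 expr1.
  by rewrite -mulrA (mulrC B) -/C cB mulr1.
split => //.
have := part1 hy => /lseqE.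
move: hE => /lseqE; rewrite cf_const rmorph0 mulr0 expr0 mul1r => hW.
rewrite hW mulr0 => h.
have h2 : cf (lmul (lpow4 (LSer 1 c)) (chazy (LSer 0 (Xf R * B)))) = 0.
  by apply: (@cancelX _ (lord (wEq (LSer 1 c)))); rewrite h mulr0.
rewrite /lpow4 !cf_mul cf_LSer -/C in h2.
apply/lseqE; rewrite cf_const rmorph0 mulr0 expr0 mul1r.
set Z := cf (chazy _) in h2 *.
have -> : Z = (B * C) ^+ 4 * Z by rewrite (mulrC B) cB expr1n mul1r.
transitivity (B ^+ 4 * (C * (C * (C * C)) * Z)); first ring.
by rewrite h2 mulr0.
Qed.

Theorem mainTheorem8 (R : numFieldType) :
  (* (1) y = 1/w turns the Chazy equation into the w-equation:
         Chazy(y) = wEq(w) / w^4 *)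
  (forall w y : lser R, lser_eq (lmul y w) (lconst 1) ->
     lser_eq (lmul (lpow4 w) (chazy y)) (wEq w)) /\
  (* (2) leading order w = w0 x^-1 balances the dominant terms, w0 arbitrary *)
  (forall w0 : R, lser_eq (wDom (lmono (-1) w0)) (lconst 0)) /\
  (* (3) resonances: the coefficient of m in the dominant terms evaluated at
         w = w0 x^-1 + m x^(R-1) is Q(R) x^(R-6); the roots of Q are -1,0,1 *)
  (forall w0 : R, w0 != 0 -> exists Q : {poly R},
     (forall r : int,
        lser_eq (lmap (fun p : {poly R} => p`_1)
                   (wDom (ladd (lmono (-1) w0%:P) (lmono (r - 1) 'X))))
                (lmono (r - 6) Q.[r%:~R])) /\
     (forall z : R, root Q z <-> z \in [:: -1; 0; 1])) /\
  (* (4) Right Painleve series w = sum_(i>=0) w_i x^(i-1): w0 <> 0 and w1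
         arbitrary, all other coefficients uniquely determined *)
  (forall w0 w1 : R, w0 != 0 -> exists! c : nat -> R,
     c 0%N = w0 /\ c 1%N = w1 /\ lser_eq (wEq (LSer 1 c)) (lconst 0)) /\
  (* (5) consequently y = 1/w solves the Chazy equation *)
  (forall c : nat -> R, c 0%N != 0 -> lser_eq (wEq (LSer 1 c)) (lconst 0) ->
     exists y : lser R, lser_eq (lmul y (LSer 1 c)) (lconst 1) /\
                        lser_eq (chazy y) (lconst 0)).
Proof.
split; first by move=> w y; exact: part1.
split; first by move=> w0; exact: part2.
split; first by move=> w0; exact: part3.
split; first by move=> w0 w1; exact: part4.
by move=> c; exact: part5.
Qed.
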